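(* Let $L$ be a frame. The category $L$-$\mathbf{LSCSob}$, whose objects are the locally super-compact $L$-sober spaces and whose morphisms are the continuous maps, is isomorphic to the category $L$-$\mathbf{CDom}$, whose objects are the continuous $L$-dcpo's and whose morphisms are the Scott continuous maps.
   Context: $L$ is a frame (complete Heyting algebra) with implication $\to$ ($a\wedge c\le b \iff c\le a\to b$). An $L$-subset of a set $X$ is a map $X\to L$; $L^X$ is the set of these; $A$ is nonempty if $\bigvee_{x}A(x)=1$; $a_X$ is the constant $L$-subset with value $a\in L$. Put ${\rm sub}_X(A,B)=\bigwedge_{x\in X}A(x)\to B(x)$. For a map $f:X\to Y$, $f^\rightarrow(A)(y)=\bigvee_{f(x)=y}A(x)$ and $f^\leftarrow(B)=B\circ f$. An ($L$-)topology on $X$ is $\mathcal O(X)\subseteq L^X$ closed under finite meets and arbitrary joins and containing every constant $a_X$; its members are open; $(X,\mathcal O(X))$ is an $L$-topological space. Interior: $A^\circ=\bigvee\{B\in\mathcal O(X): B\le A\}$. A map $f$ is continuous if $f^\leftarrow(B)$ is open for all open $B$. An $L$-order on $P$ is $e:P\times P\to L$ with $e(x,x)=1$, $e(x,y)\wedge e(y,z)\le e(x,z)$, and $e(x,y)\wedge e(y,x)=1\Rightarrow x=y$. Put ${\downarrow}y(x)=e(x,y)$, ${\uparrow}y(x)=e(y,x)$. $A\in L^P$ is an upper (lower) set if $A(x)\wedge e(x,y)\le A(y)$ (resp. $A(x)\wedge e(y,x)\le A(y)$). $x=\sqcup A$ (supremum) if $e(x,y)={\rm sub}_P(A,{\downarrow}y)$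 for all $y$. $D\in L^P$ is directed if nonempty and $D(x)\wedge D(y)\le\bigvee_z D(z)\wedge e(x,z)\wedge e(y,z)$; an ideal is a directed lower set. $P$ is an $L$-dcpo if every directed $L$-subset has a supremum. $f:P\to Q$ is Scott continuous if for every directed $D$ with a supremum, $f^\rightarrow(D)$ has a supremum and $f(\sqcup D)=\sqcup f^\rightarrow(D)$. Define ${\Downarrow}x(y)=\bigwedge\{e(x,\sqcup I)\to I(y): I \text{ an ideal of } P \text{ having a supremum}\}$; $P$ is continuous if each ${\Downarrow}x$ is directed with $\sqcup{\Downarrow}x=x$; a continuous $L$-dcpo is a continuous $L$-ordered set that is an $L$-dcpo. Super-compact: $A\in L^X$ nonempty with ${\rm sub}_X(A,\bigvee_i V_i)=\bigvee_i{\rm sub}_X(A,V_i)$ for every family of open sets $V_i$; ${\rm SC}(X)$ is the set of these. $X$ is locally super-compact if every open $A$ satisfies $A=\bigvee_{B\in{\rm SC}(X)}{\rm sub}_X(B,A)\wedge B^\circ$. A point of $\mathcal O(X)$ is $p:\mathcal O(X)\to L$ with $p(A\wedge B)=p(A)\wedge p(B)$, $p(\bigvee_iA_i)=\bigvee_ip(A_i)$ and $p(\lambda_X)=\lambda$ for all $\lambda\in L$. For $x\in X$, $[x](A)=A(x)$ is a point. $X$ is $L$-sober if $x\mapsto[x]$ is a bijection from $X$ onto the set of points of $\mathcal O(X)$. *)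

(* Defs.v *)
From Stdlib Require Import JMeq.




Record frame := Frame {
  fcar :> Type;
  fle : fcar -> fcar -> Prop;
  fle_refl : forall a, fle a a;
  fle_trans : forall a b c, fle a b -> fle b c -> fle a c;
  fle_anti : forall a b, fle a b -> fle b a -> a = b;
  fsup : (fcar -> Prop) -> fcar;
  fsup_ub : forall (S : fcar -> Prop) a, S a -> fle a (fsup S);
  fsup_least : forall (S : fcar -> Prop) b,
      (forall a, S a -> fle a b) -> fle (fsup S) b;
  fmeet : fcar -> fcar -> fcar;
  fmeet_l : forall a b, fle (fmeet a b) a;
  fmeet_r : forall a b, fle (fmeet a b) b;
  fmeet_glb : forall a b c, fle c a -> fle c b -> fle c (fmeet a b);
  fimp : fcar -> fcar -> fcar;
  fimp_adj : forall a b c, fle (fmeet a c) b <-> fle c (fimp a b)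
}.

Arguments fle {f}.
Arguments fsup {f}.
Arguments fmeet {f}.
Arguments fimp {f}.

Definition bigjoin {L : frame} {I : Type} (F : I -> L) : L :=
  fsup (fun a => exists i, a = F i).
Definition bigmeet {L : frame} {I : Type} (F : I -> L) : L :=
  fsup (fun a => forall i, fle a (F i)).
Definition finf {L : frame} (S : L -> Prop) : L :=
  fsup (fun a => forall b, S b -> fle a b).
Definition ftop {L : frame} : L := fsup (fun _ => True).

Definition cst {L : frame} (X : Type) (a : L) : X -> L := fun _ => a.

Definition subX {L : frame} {X : Type} (A B : X -> L) : L :=
  bigmeet (fun x => fimp (A x) (B x)).

Definition nonemptyL {L : frame} {X : Type} (A : X -> L) : Prop :=
  bigjoin A = ftop.

Definition leL {L : frame} {X : Type} (A B : X -> L) : Prop :=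
  forall x, fle (A x) (B x).

Definition fimage {L : frame} {X Y : Type} (f : X -> Y) (A : X -> L) : Y -> L :=
  fun y => fsup (fun a => exists x, f x = y /\ a = A x).

Definition is_topology {L : frame} {X : Type} (O : (X -> L) -> Prop) : Prop :=
  (forall A B, O A -> O B -> O (fun x => fmeet (A x) (B x))) /\
  (forall (I : Type) (V : I -> X -> L), (forall i, O (V i)) ->
       O (fun x => bigjoin (fun i => V i x))) /\
  (forall a : L, O (cst X a)).

Definition interior {L : frame} {X : Type} (O : (X -> L) -> Prop) (A : X -> L)
  : X -> L :=
  fun x => fsup (fun a => exists B, O B /\ leL B A /\ a = B x).

Definition Lcontinuous {L : frame} {X Y : Type}
  (OX : (X -> L) -> Prop) (OY : (Y -> L) -> Prop) (f : X -> Y) : Prop :=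
  forall B, OY B -> OX (fun x => B (f x)).

Definition super_compact {L : frame} {X : Type} (O : (X -> L) -> Prop)
  (A : X -> L) : Prop :=
  nonemptyL A /\
  forall (I : Type) (V : I -> X -> L), (forall i, O (V i)) ->
    subX A (fun x => bigjoin (fun i => V i x)) = bigjoin (fun i => subX A (V i)).

Definition locally_super_compact {L : frame} {X : Type}
  (O : (X -> L) -> Prop) : Prop :=
  forall A, O A ->
    A = (fun x => fsup (fun a => exists B, super_compact O B /\
                                   a = fmeet (subX B A) (interior O B x))).

(* points of O(X): maps O(X) -> L, represented as functions (X -> L) -> L
   whose values off O(X) are irrelevant (two points are equal iff they
   agree on all open sets). *)
Definition is_point {L : frame} {X : Type} (O : (X -> L) -> Prop)
  (p : (X -> L) -> L) : Prop :=
  (forall A B, O A -> O B -> p (fun x => fmeet (A x) (B x)) = fmeet (p A) (p B)) /\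
  (forall (I : Type) (V : I -> X -> L), (forall i, O (V i)) ->
     p (fun x => bigjoin (fun i => V i x)) = bigjoin (fun i => p (V i))) /\
  (forall a : L, p (cst X a) = a).

(* x |-> [x] is a bijection from X onto the points of O(X) *)
Definition L_sober {L : frame} {X : Type} (O : (X -> L) -> Prop) : Prop :=
  (forall x y : X, (forall A, O A -> A x = A y) -> x = y) /\
  (forall p, is_point O p -> exists x : X, forall A, O A -> p A = A x).

Definition is_Lorder {L : frame} {P : Type} (e : P -> P -> L) : Prop :=
  (forall x, e x x = ftop) /\
  (forall x y z, fle (fmeet (e x y) (e y z)) (e x z)) /\
  (forall x y, fmeet (e x y) (e y x) = ftop -> x = y).

Definition down {L : frame} {P : Type} (e : P -> P -> L) (y : P) : P -> L :=
  fun x => e x y.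

Definition lower_set {L : frame} {P : Type} (e : P -> P -> L) (A : P -> L) : Prop :=
  forall x y, fle (fmeet (A x) (e y x)) (A y).

Definition is_sup {L : frame} {P : Type} (e : P -> P -> L) (A : P -> L) (x : P)
  : Prop := forall y, e x y = subX A (down e y).

Definition directed {L : frame} {P : Type} (e : P -> P -> L) (D : P -> L) : Prop :=
  nonemptyL D /\
  forall x y, fle (fmeet (D x) (D y))
                  (bigjoin (fun z => fmeet (D z) (fmeet (e x z) (e y z)))).

Definition ideal {L : frame} {P : Type} (e : P -> P -> L) (I : P -> L) : Prop :=
  directed e I /\ lower_set e I.

Definition L_dcpo {L : frame} {P : Type} (e : P -> P -> L) : Prop :=
  forall D, directed e D -> exists x, is_sup e D x.

Definition Scott_continuous {L : frame} {P Q : Type}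
  (eP : P -> P -> L) (eQ : Q -> Q -> L) (f : P -> Q) : Prop :=
  forall D, directed eP D -> forall x, is_sup eP D x ->
    is_sup eQ (fimage f D) (f x).

Definition wayb {L : frame} {P : Type} (e : P -> P -> L) (x : P) : P -> L :=
  fun y => finf (fun b => exists (I : P -> L) (s : P),
                   ideal e I /\ is_sup e I s /\ b = fimp (e x s) (I y)).

Definition continuous_Lordered {L : frame} {P : Type} (e : P -> P -> L) : Prop :=
  forall x, directed e (wayb e x) /\ is_sup e (wayb e x) x.

Record LSCSob (L : frame) := MkLSCSob {
  sob_car : Type;
  sob_O : (sob_car -> L) -> Prop;
  sob_top : is_topology sob_O;
  sob_lsc : locally_super_compact sob_O;
  sob_sober : L_sober sob_O
}.
Arguments sob_car {L}.
Arguments sob_O {L}.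

Record LSCSob_hom {L : frame} (A B : LSCSob L) := MkLSCSobHom {
  sob_fun : sob_car A -> sob_car B;
  sob_fun_cont : Lcontinuous (sob_O A) (sob_O B) sob_fun
}.
Arguments sob_fun {L A B}.

Record CDom (L : frame) := MkCDom {
  cd_car : Type;
  cd_e : cd_car -> cd_car -> L;
  cd_ord : is_Lorder cd_e;
  cd_dcpo : L_dcpo cd_e;
  cd_cont : continuous_Lordered cd_e
}.
Arguments cd_car {L}.
Arguments cd_e {L}.

Record CDom_hom {L : frame} (A B : CDom L) := MkCDomHom {
  cd_fun : cd_car A -> cd_car B;
  cd_fun_scott : Scott_continuous (cd_e A) (cd_e B) cd_fun
}.
Arguments cd_fun {L A B}.

(* In both categories identities are
   the identity maps and composition is composition of maps; morphisms are
   determined by their underlying maps.  A functor is given by an object map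
   and a morphism map preserving identities and composition; the categories
   are isomorphic if there are functors F, G with G o F = Id and F o G = Id
   (on objects strictly, on morphisms up to the induced identification of
   hom-types, expressed with JMeq). *)

Definition functor_LS_CD {L : frame} (F0 : LSCSob L -> CDom L)
  (F1 : forall A B, LSCSob_hom A B -> CDom_hom (F0 A) (F0 B)) : Prop :=
  (forall A (h : LSCSob_hom A A), (forall x, sob_fun h x = x) ->
     forall y, cd_fun (F1 A A h) y = y) /\
  (forall A B C (f : LSCSob_hom A B) (g : LSCSob_hom B C) (h : LSCSob_hom A C),
     (forall x, sob_fun h x = sob_fun g (sob_fun f x)) ->
     forall y, cd_fun (F1 A C h) y = cd_fun (F1 B C g) (cd_fun (F1 A B f) y)).

Definition functor_CD_LS {L : frame} (G0 : CDom L -> LSCSob L)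
  (G1 : forall A B, CDom_hom A B -> LSCSob_hom (G0 A) (G0 B)) : Prop :=
  (forall A (h : CDom_hom A A), (forall x, cd_fun h x = x) ->
     forall y, sob_fun (G1 A A h) y = y) /\
  (forall A B C (f : CDom_hom A B) (g : CDom_hom B C) (h : CDom_hom A C),
     (forall x, cd_fun h x = cd_fun g (cd_fun f x)) ->
     forall y, sob_fun (G1 A C h) y = sob_fun (G1 B C g) (sob_fun (G1 A B f) y)).

Definition categories_isomorphic (L : frame) : Prop :=
  exists (F0 : LSCSob L -> CDom L)
         (F1 : forall A B, LSCSob_hom A B -> CDom_hom (F0 A) (F0 B))
         (G0 : CDom L -> LSCSob L)
         (G1 : forall A B, CDom_hom A B -> LSCSob_hom (G0 A) (G0 B)),
    functor_LS_CD F0 F1 /\ functor_CD_LS G0 G1 /\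
    (forall A, G0 (F0 A) = A) /\
    (forall B, F0 (G0 B) = B) /\
    (forall A B (f : LSCSob_hom A B), JMeq (G1 _ _ (F1 A B f)) f) /\
    (forall A B (g : CDom_hom A B), JMeq (F1 _ _ (G1 A B g)) g).

(* Main.v *)
Require Import Defs.
From Stdlib Require Import JMeq FunctionalExtensionality PropExtensionality ProofIrrelevance.

Section Frm.
Variable L : frame.
Local Notation "a ⊑ b" := (@fle L a b) (at level 70).

Lemma lt (a b c : L) : a ⊑ b -> b ⊑ c -> a ⊑ c.
Proof. apply fle_trans. Qed.

Lemma Yo (a b : L) : (forall t, t ⊑ a -> t ⊑ b) -> a ⊑ b.
Proof. intro H; apply H, fle_refl. Qed.

Lemma antiY (a b : L) : (forall t, t ⊑ a -> t ⊑ b) -> (forall t, t ⊑ b -> t ⊑ a) -> a = b.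
Proof. intros H1 H2; apply fle_anti; apply Yo; auto. Qed.

Lemma meetI (t a b : L) : t ⊑ a -> t ⊑ b -> t ⊑ fmeet a b.
Proof. apply fmeet_glb. Qed.
Lemma meetE1 (t a b : L) : t ⊑ fmeet a b -> t ⊑ a.
Proof. intro H; eapply lt; [exact H| apply fmeet_l]. Qed.
Lemma meetE2 (t a b : L) : t ⊑ fmeet a b -> t ⊑ b.
Proof. intro H; eapply lt; [exact H| apply fmeet_r]. Qed.

Lemma topI (t : L) : t ⊑ ftop.
Proof. unfold ftop; apply fsup_ub; exact I. Qed.

Lemma top_eq (a : L) : ftop ⊑ a -> a = ftop.
Proof. intro H; apply fle_anti; [apply topI|exact H]. Qed.

Lemma supI (t : L) (S : L -> Prop) s : S s -> t ⊑ s -> t ⊑ fsup S.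
Proof. intros H1 H2; eapply lt; [exact H2| apply fsup_ub; exact H1]. Qed.

Lemma supE (t d : L) (S : L -> Prop) : t ⊑ fsup S ->
  (forall s t', S s -> t' ⊑ t -> t' ⊑ s -> t' ⊑ d) -> t ⊑ d.
Proof.
  intros H K.
  assert (H1 : fle (fmeet t (fsup S)) d).
  { apply fimp_adj. apply fsup_least. intros a Ha. apply fimp_adj.
    apply K with a; auto. apply fmeet_l. apply fmeet_r. }
  eapply lt; [|exact H1]. apply meetI; auto. apply fle_refl.
Qed.

Lemma joinI {I : Type} (t : L) (F : I -> L) i : t ⊑ F i -> t ⊑ bigjoin F.
Proof. intro H; eapply supI; [exists i; reflexivity| exact H]. Qed.

Lemma joinE {I : Type} (t d : L) (F : I -> L) : t ⊑ bigjoin F ->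
  (forall i t', t' ⊑ t -> t' ⊑ F i -> t' ⊑ d) -> t ⊑ d.
Proof.
  intros H K. eapply supE; [exact H|]. intros s t' [i ->] H1 H2. eauto.
Qed.

Lemma bmeetI {I : Type} (t : L) (F : I -> L) : (forall i, t ⊑ F i) -> t ⊑ bigmeet F.
Proof. intro H; apply fsup_ub. intro i. auto. Qed.

Lemma bmeetE {I : Type} (t : L) (F : I -> L) i : t ⊑ bigmeet F -> t ⊑ F i.
Proof. intro H; eapply lt; [exact H|]. apply fsup_least. intros a Ha; apply Ha. Qed.

Lemma finfI (t : L) (S : L -> Prop) : (forall b, S b -> t ⊑ b) -> t ⊑ finf S.
Proof. intro H; apply fsup_ub. auto. Qed.

Lemma finfE (t : L) (S : L -> Prop) b : t ⊑ finf S -> S b -> t ⊑ b.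
Proof. intros H Hb; eapply lt; [exact H|]. apply fsup_least. intros a Ha; auto. Qed.

Lemma impI (t a b : L) : (forall t', t' ⊑ t -> t' ⊑ a -> t' ⊑ b) -> t ⊑ fimp a b.
Proof.
  intro H. apply fimp_adj. apply H. apply fmeet_r. apply fmeet_l.
Qed.

Lemma impE (t a b : L) : t ⊑ fimp a b -> t ⊑ a -> t ⊑ b.
Proof.
  intros H1 H2. assert (H3 : fle (fmeet a (fimp a b)) b) by (apply fimp_adj, fle_refl).
  eapply lt; [|exact H3]. apply meetI; auto.
Qed.

End Frm.

Ltac down H :=
  match type of H with @fle ?L ?t' ?t =>
    repeat match goal with
    | K : @fle L t ?a |- _ => apply (fun h => fle_trans L _ _ _ H h) in K
    end end.

Ltac jE H := let i := fresh "i" in let t := fresh "t" in let Ht := fresh "Ht" in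
  let Hi := fresh "Hi" in
  apply (joinE _ _ _ _ H); intros i t Ht Hi; down Ht; clear Ht.
Ltac sE H := let i := fresh "s" in let Si := fresh "Si" in let t := fresh "t" in let Ht := fresh "Ht" in
  let Hi := fresh "Hi" in
  apply (supE _ _ _ _ H); intros i t Si Ht Hi; down Ht; clear Ht.

Section Ord.
Variable L : frame.
Local Notation "a ⊑ b" := (@fle L a b) (at level 70).
Variable P : Type.
Variable e : P -> P -> L.
Hypothesis He : is_Lorder e.

Lemma erefl' t x : t ⊑ e x x.
Proof. destruct He as [H _]. rewrite H. apply topI. Qed.

Lemma etr t x y z : t ⊑ e x y -> t ⊑ e y z -> t ⊑ e x z.
Proof. destruct He as [_ [H _]]. intros; eapply lt; [|apply H]. apply meetI; eauto. Qed.

Lemma eanti x y : ftop ⊑ e x y -> ftop ⊑ e y x -> x = y.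
Proof. destruct He as [_ [_ H]]. intros; apply H. apply top_eq. apply meetI; auto. Qed.

Lemma sup_ub D s t z : is_sup e D s -> t ⊑ D z -> t ⊑ e z s.
Proof.
  intros Hs H. assert (H1 : t ⊑ e s s) by apply erefl'. rewrite Hs in H1.
  unfold subX in H1. apply (bmeetE _ _ _ z) in H1. exact (impE _ _ _ _ H1 H).
Qed.

Lemma sup_least D s t y : is_sup e D s ->
  (forall z t', t' ⊑ t -> t' ⊑ D z -> t' ⊑ e z y) -> t ⊑ e s y.
Proof.
  intros Hs H. rewrite Hs. apply bmeetI. intro z. apply impI. intros; eauto.
Qed.

Lemma sup_elim D s t y z : is_sup e D s -> t ⊑ e s y -> t ⊑ D z -> t ⊑ e z y.
Proof.
  intros Hs H1 H2. rewrite Hs in H1. apply (bmeetE _ _ _ z) in H1. exact (impE _ _ _ _ H1 H2).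
Qed.

Lemma sup_unique D s s' : is_sup e D s -> is_sup e D s' -> s = s'.
Proof.
  intros H1 H2. apply eanti.
  - eapply sup_least; eauto. intros. eapply sup_ub; eauto.
  - eapply sup_least; eauto. intros. eapply sup_ub; eauto.
Qed.

Lemma down_ideal x : ideal e (down e x).
Proof.
  split; [split|].
  - apply top_eq. apply joinI with x. apply erefl'.
  - intros a b. apply Yo. intros t Ht. apply joinI with x. unfold down in *.
    apply meetI; [apply erefl'|]. exact Ht.
  - intros a b. unfold down. apply Yo; intros t Ht.
    eapply etr; [apply (meetE2 _ _ _ _ Ht)| apply (meetE1 _ _ _ _ Ht)].
Qed.

Lemma down_sup x : is_sup e (down e x) x.
Proof.
  intro y. apply antiY; intros t Ht.
  - apply bmeetI; intro z. apply impI. intros t' Ht' H. unfold down in H.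
    eapply etr; [exact H| exact (lt _ _ _ _ Ht' Ht)].
  - apply (bmeetE _ _ _ x) in Ht. exact (impE _ _ _ _ Ht (erefl' _ _)).
Qed.

Lemma waybI x y t : (forall I s t', ideal e I -> is_sup e I s -> t' ⊑ t -> t' ⊑ e x s -> t' ⊑ I y)
  -> t ⊑ wayb e x y.
Proof.
  intro H. apply finfI. intros b [I [s [HI [Hs ->]]]]. apply impI. intros; eauto.
Qed.

Lemma waybE x y t I s : t ⊑ wayb e x y -> ideal e I -> is_sup e I s -> t ⊑ e x s -> t ⊑ I y.
Proof.
  intros H HI Hs H1. eapply impE; [|exact H1]. eapply finfE; [exact H|].
  exists I, s; auto.
Qed.

Lemma wayb_le t x y : t ⊑ wayb e x y -> t ⊑ e y x.
Proof.
  intro H. apply (waybE _ _ _ _ _ H (down_ideal x) (down_sup x)). apply erefl'.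
Qed.

Lemma wayb_up t x x' y : t ⊑ wayb e x y -> t ⊑ e x x' -> t ⊑ wayb e x' y.
Proof.
  intros H1 H2. apply waybI. intros I s t' HI Hs Ht' H3.
  apply (waybE _ _ _ _ _ (lt _ _ _ _ Ht' H1) HI Hs). exact (etr _ _ _ _ (lt _ _ _ _ Ht' H2) H3).
Qed.

Lemma lower_elim I t x y : ideal e I -> t ⊑ I x -> t ⊑ e y x -> t ⊑ I y.
Proof. intros [_ HI] H1 H2. eapply lt; [|apply HI]. apply meetI; eauto. Qed.

Lemma wayb_down t x y y' : t ⊑ wayb e x y -> t ⊑ e y' y -> t ⊑ wayb e x y'.
Proof.
  intros H1 H2. apply waybI. intros I s t' HI Hs Ht' H3.
  apply (lower_elim _ _ _ _ HI (waybE _ _ _ _ _ (lt _ _ _ _ Ht' H1) HI Hs H3) (lt _ _ _ _ Ht' H2)).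
Qed.

Definition lc (D : P -> L) : P -> L := fun y => bigjoin (fun z => fmeet (D z) (e y z)).

Lemma lc_ideal D : directed e D -> ideal e (lc D).
Proof.
  intros [Hn Hd]. split; [split|].
  - unfold nonemptyL in *. apply top_eq. assert (H : ftop ⊑ bigjoin D) by (rewrite Hn; apply fle_refl).
    jE H. apply joinI with i. apply joinI with i. apply meetI; auto. apply erefl'.
  - intros a b. apply Yo. intros t Ht. unfold lc in Ht.
    pose proof (meetE1 _ _ _ _ Ht) as H1. pose proof (meetE2 _ _ _ _ Ht) as H2. clear Ht.
    jE H1. jE H2.
    assert (H3 : t1 ⊑ fmeet (D i) (D i0)).
    { apply meetI; [apply (meetE1 _ _ _ _ Hi)|apply (meetE1 _ _ _ _ Hi0)]. }
    assert (H4 := lt _ _ _ _ H3 (Hd i i0)). jE H4.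
    apply joinI with i1. apply meetI.
    + apply joinI with i1. apply meetI; [apply (meetE1 _ _ _ _ Hi1)| apply erefl'].
    + apply meetI.
      * eapply etr; [apply (meetE2 _ _ _ _ Hi)|]. apply (meetE1 _ _ _ _ (meetE2 _ _ _ _ Hi1)).
      * eapply etr; [apply (meetE2 _ _ _ _ Hi0)|]. apply (meetE2 _ _ _ _ (meetE2 _ _ _ _ Hi1)).
  - intros x y. apply Yo. intros t Ht. unfold lc in *.
    pose proof (meetE1 _ _ _ _ Ht) as H1. pose proof (meetE2 _ _ _ _ Ht) as H2. clear Ht.
    jE H1. apply joinI with i. apply meetI; [apply (meetE1 _ _ _ _ Hi)|].
    eapply etr; [exact H2| apply (meetE2 _ _ _ _ Hi)].
Qed.

Lemma lc_sup D s : is_sup e D s -> is_sup e (lc D) s.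
Proof.
  intros Hs y. apply antiY; intros t Ht.
  - apply bmeetI; intro z. apply impI. intros t' Ht' H. unfold lc in H. jE H.
    eapply etr; [apply (meetE2 _ _ _ _ Hi)|]. eapply sup_elim; [exact Hs| exact (lt _ _ _ _ Ht' Ht)|].
    apply (meetE1 _ _ _ _ Hi).
  - eapply sup_least; eauto. intros z t' Ht' Hz.
    apply (bmeetE _ _ _ z) in Ht. eapply impE. exact (lt _ _ _ _ Ht' Ht).
    apply joinI with z. apply meetI; auto. apply erefl'.
Qed.

Lemma wayb_dir D s t x y : directed e D -> is_sup e D s -> t ⊑ wayb e x y -> t ⊑ e x s ->
  t ⊑ lc D y.
Proof.
  intros Hd Hs H1 H2. eapply waybE; eauto. apply lc_ideal; auto. apply lc_sup; auto.
Qed.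

End Ord.

Lemma scott_mono {L : frame} {P Q : Type} (eP : P -> P -> L) (eQ : Q -> Q -> L)
  (HP : is_Lorder eP) (HQ : is_Lorder eQ) (g : P -> Q) :
  Scott_continuous eP eQ g -> forall t x y, fle t (eP y x) -> fle t (eQ (g y) (g x)).
Proof.
  intros Hg t x y H. pose proof (Hg _ (proj1 (down_ideal _ _ _ HP x)) x (down_sup _ _ _ HP x)) as Hs.
  eapply sup_ub; eauto. unfold fimage. eapply supI; [exists y; split; reflexivity|]. exact H.
Qed.
Arguments lc {L P} e D y.

Definition Oe {L : frame} {P : Type} (e : P -> P -> L) (U : P -> L) : Prop :=
  forall x, U x = bigjoin (fun y => fmeet (wayb e x y) (U y)).

Definition spec {L : frame} {X : Type} (O : (X -> L) -> Prop) (x y : X) : L :=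
  finf (fun b => exists U, O U /\ b = fimp (U x) (U y)).

Lemma spec_I {L : frame} {X : Type} (O : (X -> L) -> Prop) x y (t : L) :
  (forall U t', O U -> fle t' t -> fle t' (U x) -> fle t' (U y)) -> fle t (spec O x y).
Proof.
  intro H. apply finfI. intros b [U [HU ->]]. apply impI. intros; eauto.
Qed.

Lemma spec_E {L : frame} {X : Type} (O : (X -> L) -> Prop) x y (t : L) U :
  fle t (spec O x y) -> O U -> fle t (U x) -> fle t (U y).
Proof.
  intros H HU H1. eapply impE; [|exact H1]. eapply finfE; [exact H|]. exists U; auto.
Qed.

Lemma fsup_join {L : frame} {I : Type} (Q : I -> Prop) (F : I -> L) :
  fsup (fun a => exists i, Q i /\ a = F i) = bigjoin (fun s : {i | Q i} => F (proj1_sig s)).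
Proof.
  apply antiY; intros t Ht.
  - sE Ht. destruct Si as [i [Hq ->]]. apply joinI with (exist _ i Hq). exact Hi.
  - jE Ht. eapply supI; [|exact Hi]. exists (proj1_sig i). split; auto. apply proj2_sig.
Qed.

Section Cont.
Variable L : frame.
Local Notation "a ⊑ b" := (@fle L a b) (at level 70).
Variable P : Type.
Variable e : P -> P -> L.
Hypothesis He : is_Lorder e.
Hypothesis Hd : L_dcpo e.
Hypothesis Hc : continuous_Lordered e.

Local Notation W := (wayb e).

Lemma W_ne t x : t ⊑ bigjoin (W x).
Proof. destruct (Hc x) as [[Hn _] _]. unfold nonemptyL in Hn. rewrite Hn. apply topI. Qed.

Lemma W_dir t x a b : t ⊑ W x a -> t ⊑ W x b ->
  t ⊑ bigjoin (fun z => fmeet (W x z) (fmeet (e a z) (e b z))).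
Proof.
  destruct (Hc x) as [[_ Hdir] _]. intros H1 H2. eapply lt; [|apply Hdir]. apply meetI; auto.
Qed.

Lemma W_sup x : is_sup e (W x) x.
Proof. apply (Hc x). Qed.

Definition ID x z := bigjoin (fun y => fmeet (W x y) (W y z)).

Lemma ID_ideal x : ideal e (ID x).
Proof.
  split; [split|].
  - apply top_eq. pose proof (W_ne ftop x) as H. jE H.
    pose proof (W_ne t i) as H2. jE H2. apply joinI with i0. apply joinI with i. apply meetI; auto.
  - intros a b. apply Yo. intros t Ht.
    pose proof (meetE1 _ _ _ _ Ht) as H1. pose proof (meetE2 _ _ _ _ Ht) as H2. clear Ht.
    unfold ID in H1, H2. jE H1. jE H2.
    pose proof (W_dir _ _ _ _ (meetE1 _ _ _ _ Hi) (meetE1 _ _ _ _ Hi0)) as H3. jE H3.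
    pose proof (wayb_up _ _ _ He _ _ _ _ (meetE2 _ _ _ _ Hi) (meetE1 _ _ _ _ (meetE2 _ _ _ _ Hi1))) as Ha.
    pose proof (wayb_up _ _ _ He _ _ _ _ (meetE2 _ _ _ _ Hi0) (meetE2 _ _ _ _ (meetE2 _ _ _ _ Hi1))) as Hb.
    pose proof (W_dir _ _ _ _ Ha Hb) as H4. jE H4.
    apply joinI with i2. apply meetI.
    + apply joinI with i1. apply meetI; [apply (meetE1 _ _ _ _ Hi1)| apply (meetE1 _ _ _ _ Hi2)].
    + apply (meetE2 _ _ _ _ Hi2).
  - intros y z. apply Yo. intros t Ht.
    pose proof (meetE1 _ _ _ _ Ht) as H1. pose proof (meetE2 _ _ _ _ Ht) as H2. clear Ht.
    unfold ID in H1. jE H1. apply joinI with i. apply meetI; [apply (meetE1 _ _ _ _ Hi)|].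
    eapply wayb_down; [apply (meetE2 _ _ _ _ Hi)| exact H2].
Qed.

Lemma ID_sup x : is_sup e (ID x) x.
Proof.
  intro y. apply antiY; intros t Ht.
  - apply bmeetI; intro z. apply impI. intros t' Ht' H. unfold ID in H. unfold down. jE H.
    exact (etr _ _ _ He _ _ _ _ (etr _ _ _ He _ _ _ _ (wayb_le _ _ _ He _ _ _ (meetE2 _ _ _ _ Hi)) (wayb_le _ _ _ He _ _ _ (meetE1 _ _ _ _ Hi))) (lt _ _ _ _ Ht' Ht)).
  - eapply sup_least; [apply W_sup|]. intros z t' Ht' Hz.
    eapply sup_least; [apply W_sup|]. intros w t'' Ht'' Hw.
    apply (bmeetE _ _ _ w) in Ht. eapply impE. exact (lt _ _ _ _ (lt _ _ _ _ Ht'' Ht') Ht).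
    apply joinI with z. apply meetI; [exact (lt _ _ _ _ Ht'' Hz)| exact Hw].
Qed.

Lemma interp t x z : t ⊑ W x z -> t ⊑ bigjoin (fun y => fmeet (W x y) (W y z)).
Proof.
  intro H. change (t ⊑ ID x z). eapply waybE; [exact H| apply ID_ideal| apply ID_sup| apply (erefl' _ _ _ He)].
Qed.

Lemma Oe_up U t x x' : Oe e U -> t ⊑ U x -> t ⊑ e x x' -> t ⊑ U x'.
Proof.
  intros HU H1 H2. rewrite HU in H1. rewrite HU. jE H1. apply joinI with i. apply meetI.
  - eapply (wayb_up _ _ _ He); [apply (meetE1 _ _ _ _ Hi)| exact H2].
  - apply (meetE2 _ _ _ _ Hi).
Qed.

Lemma Oe_top : is_topology (Oe e).
Proof.
  split; [|split].
  - intros A B HA HB x. apply antiY; intros t Ht.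
    + pose proof (meetE1 _ _ _ _ Ht) as H1. pose proof (meetE2 _ _ _ _ Ht) as H2. clear Ht.
      rewrite HA in H1. rewrite HB in H2. jE H1. jE H2.
      pose proof (W_dir _ _ _ _ (meetE1 _ _ _ _ Hi) (meetE1 _ _ _ _ Hi0)) as H3. jE H3.
      apply joinI with i1. apply meetI; [apply (meetE1 _ _ _ _ Hi1)|]. apply meetI.
      * eapply Oe_up; [exact HA| apply (meetE2 _ _ _ _ Hi)| apply (meetE1 _ _ _ _ (meetE2 _ _ _ _ Hi1))].
      * eapply Oe_up; [exact HB| apply (meetE2 _ _ _ _ Hi0)| apply (meetE2 _ _ _ _ (meetE2 _ _ _ _ Hi1))].
    + jE Ht. pose proof (wayb_le _ _ _ He _ _ _ (meetE1 _ _ _ _ Hi)) as Hyx.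
      apply meetI.
      * eapply Oe_up; [exact HA| apply (meetE1 _ _ _ _ (meetE2 _ _ _ _ Hi))| exact Hyx].
      * eapply Oe_up; [exact HB| apply (meetE2 _ _ _ _ (meetE2 _ _ _ _ Hi))| exact Hyx].
  - intros I V HV x. apply antiY; intros t Ht.
    + jE Ht. rewrite HV in Hi. jE Hi. apply joinI with i0. apply meetI; [apply (meetE1 _ _ _ _ Hi0)|].
      apply joinI with i. apply (meetE2 _ _ _ _ Hi0).
    + jE Ht. pose proof (meetE2 _ _ _ _ Hi) as H2. jE H2. apply joinI with i0.
      eapply Oe_up; [apply HV| exact Hi0|]. eapply (wayb_le _ _ _ He); [apply (meetE1 _ _ _ _ Hi)].
  - intros a x. apply antiY; intros t Ht.
    + pose proof (W_ne t x) as H. jE H. apply joinI with i. apply meetI; auto.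
    + jE Ht. apply (meetE2 _ _ _ _ Hi).
Qed.

Definition Up z : P -> L := fun x => W x z.

Lemma Up_open z : Oe e (Up z).
Proof.
  intro x. unfold Up. apply antiY; intros t Ht.
  - apply interp; auto.
  - jE Ht. eapply (wayb_up _ _ _ He); [apply (meetE2 _ _ _ _ Hi)|].
    eapply (wayb_le _ _ _ He); [apply (meetE1 _ _ _ _ Hi)].
Qed.

Lemma spec_Oe : spec (Oe e) = e.
Proof.
  apply functional_extensionality; intro x. apply functional_extensionality; intro y.
  apply antiY; intros t Ht.
  - eapply sup_least; [apply W_sup|]. intros z t' Ht' Hz.
    eapply (wayb_le _ _ _ He). change (t' ⊑ Up z y).
    eapply spec_E; [exact (lt _ _ _ _ Ht' Ht)| apply Up_open| exact Hz].
  - apply spec_I. intros U t' HU Ht' H. eapply Oe_up; [exact HU| exact H| exact (lt _ _ _ _ Ht' Ht)].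
Qed.


Lemma up_sub V y : Oe e V -> subX (fun x => e y x) V = V y.
Proof.
  intro HV. apply antiY; intros t Ht.
  - apply (bmeetE _ _ _ y) in Ht. exact (impE _ _ _ _ Ht (erefl' _ _ _ He _ _)).
  - apply bmeetI. intro x. apply impI. intros t' Ht' H. exact (Oe_up _ _ _ _ HV (lt _ _ _ _ Ht' Ht) H).
Qed.

Lemma up_sc y : super_compact (Oe e) (fun x => e y x).
Proof.
  split.
  - apply top_eq. apply joinI with y. apply erefl'; exact He.
  - intros I V HV. rewrite (up_sub (fun x => bigjoin (fun i => V i x))).
    + f_equal. apply functional_extensionality. intro i. symmetry. apply up_sub. apply HV.
    + apply (proj1 (proj2 Oe_top)). exact HV.
Qed.

Lemma Oe_lsc : locally_super_compact (Oe e).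
Proof.
  intros A HA. apply functional_extensionality. intro x. apply antiY; intros t Ht.
  - rewrite (HA x) in Ht. jE Ht. eapply supI.
    + exists (fun x => e i x). split; [apply up_sc| reflexivity].
    + apply meetI.
      * rewrite up_sub by exact HA. apply (meetE2 _ _ _ _ Hi).
      * eapply supI.
        -- exists (Up i). split; [apply Up_open|]. split; [|reflexivity].
           intro z. apply Yo. intros t' H'. exact (wayb_le _ _ _ He _ _ _ H').
        -- apply (meetE1 _ _ _ _ Hi).
  - sE Ht. destruct Si as [B [HB ->]]. pose proof (meetE2 _ _ _ _ Hi) as H2.
    pose proof (meetE1 _ _ _ _ Hi) as H1. sE H2. destruct Si as [C [HC [HCB ->]]].
    apply (bmeetE _ _ _ x) in H1. apply (impE _ _ _ _ H1). exact (lt _ _ _ _ Hi0 (HCB x)).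
Qed.

Lemma pt_decomp p U : is_point (Oe e) p -> Oe e U ->
  p U = bigjoin (fun z => fmeet (p (Up z)) (U z)).
Proof.
  intros [Hm [Hj Hk]] HU.
  transitivity (p (fun x => bigjoin (fun z => fmeet (Up z x) (cst P (U z) x)))).
  - f_equal. apply functional_extensionality. intro x. exact (HU x).
  - rewrite Hj.
    + f_equal. apply functional_extensionality. intro z. rewrite Hm.
      * rewrite Hk. reflexivity.
      * apply Up_open.
      * apply (proj2 (proj2 Oe_top)).
    + intro z. apply (proj1 Oe_top). apply Up_open. apply (proj2 (proj2 Oe_top)).
Qed.

Lemma Oe_sober : L_sober (Oe e).
Proof.
  split.
  - intros x y H.
    assert (E : W x = W y).
    { apply functional_extensionality. intro z. exact (H (Up z) (Up_open z)). }
    apply (sup_unique _ _ _ He (W x)). apply W_sup. rewrite E. apply W_sup.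
  - intros p Hp. pose proof Hp as [Hm [Hj Hk]].
    set (D := fun z => p (Up z)).
    assert (HD : directed e D).
    { split.
      - unfold nonemptyL, D. rewrite <- Hj by apply Up_open.
        transitivity (p (cst P ftop)); [|apply Hk]. f_equal. apply functional_extensionality.
        intro x. apply top_eq. apply W_ne.
      - intros a b. unfold D. rewrite <- Hm by apply Up_open.
        rewrite pt_decomp; [| exact Hp| apply (proj1 Oe_top); apply Up_open].
        apply Yo. intros t Ht. jE Ht. apply joinI with i. apply meetI; [apply (meetE1 _ _ _ _ Hi)|].
        pose proof (meetE2 _ _ _ _ Hi) as H2. apply meetI.
        + exact (wayb_le _ _ _ He _ _ _ (meetE1 _ _ _ _ H2)).
        + exact (wayb_le _ _ _ He _ _ _ (meetE2 _ _ _ _ H2)). }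
    destruct (Hd D HD) as [s Hs]. exists s. intros U HU.
    rewrite pt_decomp by assumption. fold D. apply antiY; intros t Ht.
    + jE Ht. apply (Oe_up _ _ _ _ HU (meetE2 _ _ _ _ Hi)). exact (sup_ub _ _ _ He _ _ _ _ Hs (meetE1 _ _ _ _ Hi)).
    + rewrite (HU s) in Ht. jE Ht.
      pose proof (wayb_dir _ _ _ He _ _ _ _ _ HD Hs (meetE1 _ _ _ _ Hi) (erefl' _ _ _ He _ _)) as H.
      unfold lc in H. jE H. apply joinI with i0. apply meetI; [apply (meetE1 _ _ _ _ Hi0)|].
      exact (Oe_up _ _ _ _ HU (meetE2 _ _ _ _ Hi) (meetE2 _ _ _ _ Hi0)).
Qed.

End Cont.

Section Space.
Variable L : frame.
Local Notation "a ⊑ b" := (@fle L a b) (at level 70).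
Variable X : Type.
Variable O : (X -> L) -> Prop.
Hypothesis Htop : is_topology O.
Hypothesis Hsob : L_sober O.

Local Notation E := (spec O).

Lemma spec_up U t x y : O U -> t ⊑ U x -> t ⊑ E x y -> t ⊑ U y.
Proof. intros HU H1 H2. exact (spec_E O x y t U H2 HU H1). Qed.

Lemma spec_order : is_Lorder E.
Proof.
  split; [|split].
  - intro x. apply top_eq. apply spec_I. intros U t' HU Ht' H. exact H.
  - intros x y z. apply Yo. intros t Ht. apply spec_I. intros U t' HU Ht' H.
    apply (spec_up U _ y z HU); [| exact (lt _ _ _ _ Ht' (meetE2 _ _ _ _ Ht))].
    apply (spec_up U _ x y HU); [exact H| exact (lt _ _ _ _ Ht' (meetE1 _ _ _ _ Ht))].
  - intros x y H. apply (proj1 Hsob). intros U HU.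
    assert (H1 : ftop ⊑ E x y) by (eapply meetE1; rewrite H; apply fle_refl).
    assert (H2 : ftop ⊑ E y x) by (eapply meetE2; rewrite H; apply fle_refl).
    apply antiY; intros t Ht.
    + exact (spec_up U t x y HU Ht (lt _ _ _ _ (topI _ t) H1)).
    + exact (spec_up U t y x HU Ht (lt _ _ _ _ (topI _ t) H2)).
Qed.

Definition pD (D : X -> L) (U : X -> L) : L := bigjoin (fun z => fmeet (D z) (U z)).

Lemma pD_point D : directed E D -> is_point O (pD D).
Proof.
  intros [Hn Hd]. split; [|split].
  - intros A B HA HB. unfold pD. apply antiY; intros t Ht.
    + jE Ht. apply meetI.
      * apply joinI with i. apply meetI; [apply (meetE1 _ _ _ _ Hi)| apply (meetE1 _ _ _ _ (meetE2 _ _ _ _ Hi))].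
      * apply joinI with i. apply meetI; [apply (meetE1 _ _ _ _ Hi)| apply (meetE2 _ _ _ _ (meetE2 _ _ _ _ Hi))].
    + pose proof (meetE1 _ _ _ _ Ht) as H1. pose proof (meetE2 _ _ _ _ Ht) as H2. clear Ht.
      jE H1. jE H2.
      pose proof (lt _ _ _ _ (meetI _ _ _ _ (meetE1 _ _ _ _ Hi) (meetE1 _ _ _ _ Hi0)) (Hd i i0)) as H3.
      jE H3. apply joinI with i1. pose proof (meetE2 _ _ _ _ Hi1) as H4.
      apply meetI; [apply (meetE1 _ _ _ _ Hi1)|]. apply meetI.
      * exact (spec_up A _ i i1 HA (meetE2 _ _ _ _ Hi) (meetE1 _ _ _ _ H4)).
      * exact (spec_up B _ i0 i1 HB (meetE2 _ _ _ _ Hi0) (meetE2 _ _ _ _ H4)).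
  - intros I V HV. unfold pD. apply antiY; intros t Ht.
    + jE Ht. pose proof (meetE2 _ _ _ _ Hi) as H2. jE H2. apply joinI with i0. apply joinI with i.
      apply meetI; [apply (meetE1 _ _ _ _ Hi)| exact Hi0].
    + jE Ht. jE Hi. apply joinI with i0. apply meetI; [apply (meetE1 _ _ _ _ Hi0)|].
      apply joinI with i. apply (meetE2 _ _ _ _ Hi0).
  - intro a. unfold pD, cst. apply antiY; intros t Ht.
    + jE Ht. apply (meetE2 _ _ _ _ Hi).
    + assert (H : t ⊑ bigjoin D) by (rewrite Hn; apply topI). jE H. apply joinI with i.
      apply meetI; auto.
Qed.

Lemma dir_point D : directed E D -> exists s, is_sup E D s /\ forall U, O U -> U s = pD D U.
Proof.
  intro HD. destruct (proj2 Hsob _ (pD_point D HD)) as [s Hs]. exists s. split.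
  - intro y. apply antiY; intros t Ht.
    + apply bmeetI. intro z. apply impI. intros t' Ht' Hz. apply spec_I. intros U t'' HU Ht'' H.
      assert (H1 : t'' ⊑ U s).
      { rewrite <- Hs by exact HU. apply joinI with z. apply meetI; [exact (lt _ _ _ _ Ht'' Hz)| exact H]. }
      exact (spec_up U _ s y HU H1 (lt _ _ _ _ Ht'' (lt _ _ _ _ Ht' Ht))).
    + apply spec_I. intros U t' HU Ht' H. rewrite <- Hs in H by exact HU. unfold pD in H. jE H.
      pose proof (bmeetE _ _ _ i (lt _ _ _ _ Ht' Ht)) as H2.
      pose proof (impE _ _ _ _ H2 (meetE1 _ _ _ _ Hi)) as H3.
      exact (spec_up U _ i y HU (meetE2 _ _ _ _ Hi) H3).
  - intros U HU. symmetry. apply Hs. exact HU.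
Qed.

Lemma spec_dcpo : L_dcpo E.
Proof. intros D HD. destruct (dir_point D HD) as [s [Hs _]]. exists s; exact Hs. Qed.

Lemma S_lemma D s U : directed E D -> is_sup E D s -> O U -> U s = pD D U.
Proof.
  intros HD Hs HU. destruct (dir_point D HD) as [s' [Hs' H]].
  rewrite (sup_unique _ _ _ spec_order _ _ _ Hs Hs'). apply H; exact HU.
Qed.

Lemma sc_rep B : super_compact O B -> exists xB, forall U, O U -> subX B U = U xB.
Proof.
  intros [Hn Hsc]. destruct (proj2 Hsob (fun U => subX B U)) as [xB HxB].
  - split; [|split].
    + intros U V _ _. apply antiY; intros t Ht.
      * apply meetI; apply bmeetI; intro x; apply (bmeetE _ _ _ x) in Ht; apply impI; intros t' Ht' H;
        pose proof (impE _ _ _ _ (lt _ _ _ _ Ht' Ht) H) as H'; [exact (meetE1 _ _ _ _ H')| exact (meetE2 _ _ _ _ H')].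
      * apply bmeetI; intro x. apply impI. intros t' Ht' H. apply meetI.
        -- exact (impE _ _ _ _ (bmeetE _ _ _ x (lt _ _ _ _ Ht' (meetE1 _ _ _ _ Ht))) H).
        -- exact (impE _ _ _ _ (bmeetE _ _ _ x (lt _ _ _ _ Ht' (meetE2 _ _ _ _ Ht))) H).
    + exact Hsc.
    + intro a. unfold cst. apply antiY; intros t Ht.
      * assert (H : t ⊑ bigjoin B) by (unfold nonemptyL in Hn; rewrite Hn; apply topI).
        jE H. exact (impE _ _ _ _ (bmeetE _ _ _ i Ht) Hi).
      * apply bmeetI. intro x. apply impI. intros t' Ht' _. exact (lt _ _ _ _ Ht' Ht).
  - exists xB. exact HxB.
Qed.

Lemma B_le_spec B xB t z : (forall U, O U -> subX B U = U xB) -> t ⊑ B z -> t ⊑ E xB z.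
Proof.
  intros Hr H. apply spec_I. intros U t' HU Ht' H1. rewrite <- Hr in H1 by exact HU.
  exact (impE _ _ _ _ (bmeetE _ _ _ z H1) (lt _ _ _ _ Ht' H)).
Qed.

Lemma int_le B t x : t ⊑ interior O B x -> t ⊑ B x.
Proof.
  intro H. unfold interior in H. sE H. destruct Si as [C [HC [HCB ->]]]. exact (lt _ _ _ _ Hi (HCB x)).
Qed.

Lemma int_open B : O (interior O B).
Proof.
  replace (interior O B) with (fun x => bigjoin (fun s : {C | O C /\ leL C B} => proj1_sig s x)).
  - apply (proj1 (proj2 Htop)). intro s. apply (proj2_sig s).
  - apply functional_extensionality. intro x. unfold interior. apply antiY; intros t Ht.
    + jE Ht. eapply supI; [|exact Hi]. exists (proj1_sig i). destruct (proj2_sig i). auto.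
    + sE Ht. destruct Si as [C [HC [HCB ->]]]. apply joinI with (exist _ C (conj HC HCB)). exact Hi.
Qed.

Lemma claimK B xB t x : (forall U, O U -> subX B U = U xB) -> t ⊑ interior O B x -> t ⊑ wayb E x xB.
Proof.
  intros Hr H. apply waybI. intros I s t' HI Hs Ht' H1.
  pose proof (lt _ _ _ _ Ht' H) as H2. unfold interior in H2. sE H2.
  destruct Si as [C [HC [HCB ->]]].
  pose proof (spec_up C _ x s HC Hi H1) as H3.
  rewrite (S_lemma I s C (proj1 HI) Hs HC) in H3. unfold pD in H3. jE H3.
  apply (lower_elim _ _ _ I _ i xB HI (meetE1 _ _ _ _ Hi0)).
  apply (B_le_spec B xB _ i Hr). exact (lt _ _ _ _ (meetE2 _ _ _ _ Hi0) (HCB i)).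
Qed.

End Space.

Section Space2.
Variable L : frame.
Local Notation "a ⊑ b" := (@fle L a b) (at level 70).
Variable X : Type.
Variable O : (X -> L) -> Prop.
Hypothesis Htop : is_topology O.
Hypothesis Hsob : L_sober O.
Hypothesis Hlsc : locally_super_compact O.

Local Notation E := (spec O).

Lemma lsc_at A x : O A -> A x = fsup (fun a => exists B, super_compact O B /\
                                   a = fmeet (subX B A) (interior O B x)).
Proof. intro HA. exact (f_equal (fun f => f x) (Hlsc A HA)). Qed.

Definition JQ (q : (X -> L) * X) : Prop :=
  super_compact O (fst q) /\ forall U, O U -> subX (fst q) U = U (snd q).

Definition J x y : L := fsup (fun a => exists q, JQ q /\ a = fmeet (interior O (fst q) x) (E y (snd q))).

Lemma J_ideal x : ideal E (J x).
Proof.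
  pose proof (spec_order _ _ _ Hsob) as Ho.
  split; [split|].
  - apply top_eq. pose proof (lsc_at (cst X ftop) x (proj2 (proj2 Htop) ftop)) as EQ.
    pose proof (eq_ind _ (fun v => ftop ⊑ v) (fle_refl _ ftop) _ EQ) as H. sE H. destruct Si as [B [HB ->]].
    destruct (sc_rep _ _ _ Hsob B HB) as [xB HxB]. apply joinI with xB.
    eapply supI; [exists (B, xB); split; [split; assumption| reflexivity]|].
    apply meetI; [apply (meetE2 _ _ _ _ Hi)| apply (erefl' _ _ _ Ho)].
  - intros a b. apply Yo. intros t Ht.
    pose proof (meetE1 _ _ _ _ Ht) as H1. pose proof (meetE2 _ _ _ _ Ht) as H2. clear Ht.
    unfold J in H1, H2. sE H1. destruct Si as [[B1 x1] [[HB1 Hr1] ->]]. simpl in *.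
    sE H2. destruct Si as [[B2 x2] [[HB2 Hr2] ->]]. simpl in *.
    set (C := fun z => fmeet (interior O B1 z) (interior O B2 z)).
    assert (HC : O C) by (apply (proj1 Htop); apply int_open; exact Htop).
    assert (H3 : t1 ⊑ C x) by (apply meetI; [apply (meetE1 _ _ _ _ Hi)| apply (meetE1 _ _ _ _ Hi0)]).
    rewrite lsc_at in H3 by exact HC. sE H3. destruct Si as [B3 [HB3 ->]].
    destruct (sc_rep _ _ _ Hsob B3 HB3) as [x3 Hr3].
    assert (K : forall B0 x0, (forall U, O U -> subX B0 U = U x0) -> (forall z, fle (C z) (B0 z)) ->
               t2 ⊑ E x0 x3).
    { intros B0 x0 Hr0 HCB. apply spec_I. intros U t' HU Ht' H. rewrite <- Hr0 in H by exact HU.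
      rewrite <- Hr3 by exact HU. apply bmeetI. intro z. apply impI. intros t'' Ht'' Hz.
      pose proof (impE _ _ _ _ (bmeetE _ _ _ z (lt _ _ _ _ (lt _ _ _ _ Ht'' Ht') (meetE1 _ _ _ _ Hi1))) Hz) as H4.
      exact (impE _ _ _ _ (bmeetE _ _ _ z (lt _ _ _ _ Ht'' H)) (lt _ _ _ _ H4 (HCB z))). }
    apply joinI with x3. apply meetI; [|apply meetI].
    + eapply supI; [exists (B3, x3); split; [split; assumption| reflexivity]|]. simpl.
      apply meetI; [apply (meetE2 _ _ _ _ Hi1)| apply (erefl' _ _ _ Ho)].
    + apply (etr _ _ _ Ho _ _ x1); [apply (meetE2 _ _ _ _ Hi)|]. apply (K B1 x1 Hr1).
      intro z. apply Yo. intros t' H'. apply (int_le _ _ _ _ _ _ (meetE1 _ _ _ _ H')).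
    + apply (etr _ _ _ Ho _ _ x2); [apply (meetE2 _ _ _ _ Hi0)|]. apply (K B2 x2 Hr2).
      intro z. apply Yo. intros t' H'. apply (int_le _ _ _ _ _ _ (meetE2 _ _ _ _ H')).
  - intros y w. apply Yo. intros t Ht.
    pose proof (meetE1 _ _ _ _ Ht) as H1. pose proof (meetE2 _ _ _ _ Ht) as H2. clear Ht.
    unfold J in H1. sE H1. destruct Si as [q [Hq ->]].
    eapply supI; [exists q; split; [exact Hq| reflexivity]|]. apply meetI; [apply (meetE1 _ _ _ _ Hi)|].
    apply (etr _ _ _ Ho _ _ y); [exact H2| apply (meetE2 _ _ _ _ Hi)].
Qed.

Lemma J_sup x : is_sup E (J x) x.
Proof.
  pose proof (spec_order _ _ _ Hsob) as Ho.
  intro y. apply antiY; intros t Ht.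
  - apply bmeetI. intro z. apply impI. intros t' Ht' H. unfold J in H. sE H.
    destruct Si as [[B xB] [[HB Hr] ->]]. simpl in *.
    pose proof (claimK _ _ _ Hsob _ _ _ _ Hr (meetE1 _ _ _ _ Hi)) as K.
    pose proof (wayb_le _ _ _ Ho _ _ _ K) as K2. unfold down.
    apply (etr _ _ _ Ho _ _ xB); [apply (meetE2 _ _ _ _ Hi)|].
    apply (etr _ _ _ Ho _ _ x); [exact K2| exact (lt _ _ _ _ Ht' Ht)].
  - apply spec_I. intros U t' HU Ht' H. rewrite lsc_at in H by exact HU. sE H.
    destruct Si as [B [HB ->]]. destruct (sc_rep _ _ _ Hsob B HB) as [xB Hr].
    assert (H1 : t0 ⊑ J x xB).
    { eapply supI; [exists (B, xB); split; [split; assumption| reflexivity]|]. simpl.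
      apply meetI; [apply (meetE2 _ _ _ _ Hi)| apply (erefl' _ _ _ Ho)]. }
    pose proof (impE _ _ _ _ (bmeetE _ _ _ xB (lt _ _ _ _ Ht' Ht)) H1) as H2.
    pose proof (meetE1 _ _ _ _ Hi) as H3. rewrite Hr in H3 by exact HU.
    exact (spec_up _ _ _ U _ xB y HU H3 H2).
Qed.

Lemma W_eq x : wayb E x = J x.
Proof.
  pose proof (spec_order _ _ _ Hsob) as Ho.
  apply functional_extensionality. intro y. apply antiY; intros t Ht.
  - exact (waybE _ _ _ _ _ _ _ _ Ht (J_ideal x) (J_sup x) (erefl' _ _ _ Ho _ _)).
  - unfold J in Ht. sE Ht. destruct Si as [[B xB] [[HB Hr] ->]]. simpl in *.
    apply (wayb_down _ _ _ _ _ xB); [|apply (meetE2 _ _ _ _ Hi)].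
    exact (claimK _ _ _ Hsob _ _ _ _ Hr (meetE1 _ _ _ _ Hi)).
Qed.

Lemma spec_cont : continuous_Lordered E.
Proof.
  intro x. rewrite W_eq. split; [apply J_ideal| apply J_sup].
Qed.

Lemma Oe_spec : Oe E = O.
Proof.
  pose proof (spec_order _ _ _ Hsob) as Ho.
  apply functional_extensionality. intro U. apply propositional_extensionality. split.
  - intro HU.
    assert (EU : U = fun x => bigjoin (fun y => fmeet (J x y) (cst X (U y) x))).
    { apply functional_extensionality. intro x. rewrite (HU x). rewrite W_eq. reflexivity. }
    rewrite EU. apply (proj1 (proj2 Htop)). intro y. apply (proj1 Htop); [| apply (proj2 (proj2 Htop))].
    replace (fun x => J x y) with (fun x => bigjoin (fun s : {q | JQ q} =>
             fmeet (interior O (fst (proj1_sig s)) x) (cst X (E y (snd (proj1_sig s))) x))).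
    + apply (proj1 (proj2 Htop)). intro s. apply (proj1 Htop); [apply int_open; exact Htop| apply (proj2 (proj2 Htop))].
    + apply functional_extensionality. intro x. unfold J. rewrite fsup_join. reflexivity.
  - intros HU x. apply antiY; intros t Ht.
    + rewrite lsc_at in Ht by exact HU. sE Ht. destruct Si as [B [HB ->]].
      destruct (sc_rep _ _ _ Hsob B HB) as [xB Hr]. apply joinI with xB. apply meetI.
      * exact (claimK _ _ _ Hsob _ _ _ _ Hr (meetE2 _ _ _ _ Hi)).
      * rewrite <- Hr by exact HU. apply (meetE1 _ _ _ _ Hi).
    + jE Ht. exact (spec_up _ _ _ U _ i x HU (meetE2 _ _ _ _ Hi) (wayb_le _ _ _ Ho _ _ _ (meetE1 _ _ _ _ Hi))).
Qed.

End Space2.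

Lemma cont_scott {L : frame} {X Y : Type} (OX : (X -> L) -> Prop) (OY : (Y -> L) -> Prop)
  (HsX : L_sober OX) (HsY : L_sober OY) (f : X -> Y) :
  Lcontinuous OX OY f -> Scott_continuous (spec OX) (spec OY) f.
Proof.
  intros Hf D HD s Hs y. pose proof (spec_order _ _ _ HsX) as HoX. pose proof (spec_order _ _ _ HsY) as HoY.
  apply antiY; intros t Ht.
  - apply bmeetI. intro z. apply impI. intros t' Ht' H. unfold fimage in H. sE H.
    destruct Si as [x [Ex ->]]. subst z. unfold down.
    apply (etr _ _ _ HoY _ _ (f s)); [| exact (lt _ _ _ _ Ht' Ht)].
    pose proof (sup_ub _ _ _ HoX _ _ _ _ Hs Hi) as H1.
    apply spec_I. intros V t'' HV Ht'' H2.
    exact (spec_up _ _ _ (fun x => V (f x)) _ x s (Hf V HV) H2 (lt _ _ _ _ Ht'' H1)).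
  - apply spec_I. intros V t' HV Ht' H0.
    pose proof (eq_ind _ (fun v => fle t' v) H0 _ (S_lemma _ _ _ HsX D s _ HD Hs (Hf V HV))) as H.
    clear H0. unfold pD in H. jE H.
    pose proof (bmeetE _ _ _ (f i) (lt _ _ _ _ Ht' Ht)) as H2.
    assert (H3 : fle t0 (fimage f D (f i))).
    { eapply supI; [exists i; split; reflexivity| apply (meetE1 _ _ _ _ Hi)]. }
    exact (spec_up _ _ _ V _ (f i) y HV (meetE2 _ _ _ _ Hi) (impE _ _ _ _ H2 H3)).
Qed.

Lemma scott_cont {L : frame} {P Q : Type} (eP : P -> P -> L) (eQ : Q -> Q -> L)
  (HP : is_Lorder eP) (HQ : is_Lorder eQ) (HcP : continuous_Lordered eP) (g : P -> Q) :
  Scott_continuous eP eQ g -> Lcontinuous (Oe eP) (Oe eQ) g.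
Proof.
  intros Hg U HU x. pose proof (scott_mono eP eQ HP HQ g Hg) as Hm.
  apply antiY; intros t Ht.
  - rewrite (HU (g x)) in Ht. jE Ht.
    set (D := wayb eP x).
    assert (HD : directed eQ (fimage g D)).
    { destruct (HcP x) as [[Hn Hdir] _]. split.
      - apply top_eq. assert (H : fle ftop (bigjoin D)) by (unfold nonemptyL in Hn; unfold D; rewrite Hn; apply fle_refl).
        jE H. apply joinI with (g i0). eapply supI; [exists i0; split; reflexivity| exact Hi0].
      - intros a b. apply Yo. intros t1 H1. pose proof (meetE1 _ _ _ _ H1) as Ha. pose proof (meetE2 _ _ _ _ H1) as Hb.
        clear H1. unfold fimage in Ha, Hb. sE Ha. destruct Si as [x1 [E1 ->]]. subst a.
        sE Hb. destruct Si as [x2 [E2 ->]]. subst b.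
        pose proof (lt _ _ _ _ (meetI _ _ _ _ Hi0 Hi1) (Hdir x1 x2)) as H3. jE H3.
        apply joinI with (g i0). pose proof (meetE2 _ _ _ _ Hi2) as H4. apply meetI; [|apply meetI].
        + eapply supI; [exists i0; split; reflexivity| apply (meetE1 _ _ _ _ Hi2)].
        + exact (Hm _ _ _ (meetE1 _ _ _ _ H4)).
        + exact (Hm _ _ _ (meetE2 _ _ _ _ H4)). }
    pose proof (Hg D (proj1 (HcP x)) x (W_sup _ _ _ HcP x)) as Hs.
    pose proof (wayb_dir _ _ _ HQ _ _ _ _ _ HD Hs (meetE1 _ _ _ _ Hi) (erefl' _ _ _ HQ _ _)) as H.
    unfold lc in H. jE H. pose proof (meetE1 _ _ _ _ Hi0) as H5. unfold fimage in H5. sE H5.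
    destruct Si as [y [Ey ->]]. subst i0. apply joinI with y. apply meetI; [exact Hi1|].
    exact (Oe_up _ _ _ HQ U _ i (g y) HU (meetE2 _ _ _ _ Hi) (meetE2 _ _ _ _ Hi0)).
  - jE Ht. apply (Oe_up _ _ _ HQ U _ (g i) (g x) HU (meetE2 _ _ _ _ Hi)).
    apply Hm. exact (wayb_le _ _ _ HP _ _ _ (meetE1 _ _ _ _ Hi)).
Qed.

Definition F0 {L : frame} (A : LSCSob L) : CDom L :=
  MkCDom L (sob_car A) (spec (sob_O A)) (spec_order _ _ _ (sob_sober L A))
    (spec_dcpo _ _ _ (sob_sober L A)) (spec_cont _ _ _ (sob_top L A) (sob_sober L A) (sob_lsc L A)).

Definition G0 {L : frame} (B : CDom L) : LSCSob L :=
  MkLSCSob L (cd_car B) (Oe (cd_e B)) (Oe_top _ _ _ (cd_ord L B) (cd_cont L B))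
    (Oe_lsc _ _ _ (cd_ord L B) (cd_cont L B)) (Oe_sober _ _ _ (cd_ord L B) (cd_dcpo L B) (cd_cont L B)).

Definition F1 {L : frame} (A B : LSCSob L) (f : LSCSob_hom A B) : CDom_hom (F0 A) (F0 B) :=
  MkCDomHom L (F0 A) (F0 B) (sob_fun f)
    (cont_scott _ _ (sob_sober L A) (sob_sober L B) _ (sob_fun_cont A B f)).

Definition G1 {L : frame} (A B : CDom L) (g : CDom_hom A B) : LSCSob_hom (G0 A) (G0 B) :=
  MkLSCSobHom L (G0 A) (G0 B) (cd_fun g)
    (scott_cont _ _ (cd_ord L A) (cd_ord L B) (cd_cont L A) _ (cd_fun_scott A B g)).

Lemma LS_eq L X O1 O2 p1 p2 p3 q1 q2 q3 : O1 = O2 ->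
  MkLSCSob L X O1 p1 p2 p3 = MkLSCSob L X O2 q1 q2 q3.
Proof. intro H; subst; f_equal; apply proof_irrelevance. Qed.

Lemma CD_eq L X e1 e2 p1 p2 p3 q1 q2 q3 : e1 = e2 ->
  MkCDom L X e1 p1 p2 p3 = MkCDom L X e2 q1 q2 q3.
Proof. intro H; subst; f_equal; apply proof_irrelevance. Qed.

Lemma GF {L : frame} (A : LSCSob L) : G0 (F0 A) = A.
Proof.
  destruct A as [X O t l s]. unfold G0, F0; simpl. apply LS_eq. apply Oe_spec; assumption.
Qed.

Lemma FG {L : frame} (B : CDom L) : F0 (G0 B) = B.
Proof.
  destruct B as [X e o d c]. unfold G0, F0; simpl. apply CD_eq. apply spec_Oe; assumption.
Qed.

Lemma LS_hom_JMeq {L : frame} (A B A' B' : LSCSob L) (h : LSCSob_hom A' B') (f : LSCSob_hom A B) :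
  A' = A -> B' = B -> JMeq (sob_fun h) (sob_fun f) -> JMeq h f.
Proof.
  intros E1 E2 H. subst. apply JMeq_eq in H. destruct h as [h ph], f as [f pf]. simpl in H. subst.
  rewrite (proof_irrelevance _ ph pf). apply JMeq_refl.
Qed.

Lemma CD_hom_JMeq {L : frame} (A B A' B' : CDom L) (h : CDom_hom A' B') (f : CDom_hom A B) :
  A' = A -> B' = B -> JMeq (cd_fun h) (cd_fun f) -> JMeq h f.
Proof.
  intros E1 E2 H. subst. apply JMeq_eq in H. destruct h as [h ph], f as [f pf]. simpl in H. subst.
  rewrite (proof_irrelevance _ ph pf). apply JMeq_refl.
Qed.

Theorem theorem4p8 (L : frame) : categories_isomorphic L.
Proof.
  exists (@F0 L), (@F1 L), (@G0 L), (@G1 L).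
  split; [|split; [|split; [|split; [|split]]]].
  - split; intros; simpl; auto.
  - split; intros; simpl; auto.
  - apply GF.
  - apply FG.
  - intros A B f. apply LS_hom_JMeq; [apply GF| apply GF| apply JMeq_refl].
  - intros A B g. apply CD_hom_JMeq; [apply FG| apply FG| apply JMeq_refl].
Qed.
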